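(* Fix $t\in[H]$ and $u>0$. Let $\mathcal D_2$ consist of $l$ i.i.d. episodes from behavior policy $\mu$, and let $V_{t+1},V^{\rm in}_{t+1}:\mathcal S\to\mathbb R$ be fixed (not depending on $\mathcal D_2$) with $\|V_{t+1}-V^{\rm in}_{t+1}\|_\infty\le2u$. Let $f(s,a)=4u\sqrt{\log(2HSA/\delta)/(l\,d^\mu_t(s,a))}$, let $n'_{t,s,a}$ be the number of episodes in $\mathcal D_2$ with $(s_t,a_t)=(s,a)$, and define \[ g_t(s,a)=\begin{cases}P_t(\cdot|s,a)^\top[V_{t+1}-V^{\rm in}_{t+1}]-f(s,a),& n'_{t,s,a}<\frac12l\,d^\mu_t(s,a),\\ \frac1{n'_{t,s,a}}\sum_{j=1}^l[V_{t+1}(s'^{(j)}_{t+1})-V^{\rm in}_{t+1}(s'^{(j)}_{t+1})]\mathbf 1[s'^{(j)}_t=s,a'^{(j)}_t=a]-f(s,a),&\text{otherwise.}\end{cases} \] Then with probability at least $1-\delta/H$, for all $(s,a)$ with $d^\mu_t(s,a)>0$, \[ 0\le P_t(\cdot|s,a)^\top[V_{t+1}-V^{\rm in}_{t+1}]-g_t(s,a)\le8u\sqrt{\frac{\log(2HSA/\delta)}{l\,d^\mu_t(s,a)}}. \]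
   Context: Finite-horizon tabular MDP with $S$ states, $A$ actions, horizon $H$, transitions $P_t$; episodes generated as $s_1\sim d_1$, $a_t\sim\mu_t(\cdot|s_t)$, $s_{t+1}\sim P_t(\cdot|s_t,a_t)$; $(s'^{(j)}_t,a'^{(j)}_t)$ denote the data of the $j$-th episode of $\mathcal D_2$. $d^\mu_t(s,a)=\mathbb P^\mu(s_t=s,a_t=a)$. $\delta\in(0,1)$. *)

(* Defs.v *)
From HB Require Import structures.
From mathcomp Require Import all_boot all_order all_algebra.
From mathcomp Require Import reals exp.
Set Implicit Arguments. Unset Strict Implicit. Unset Printing Implicit Defensive.
Import Order.TTheory GRing.Theory Num.Theory.
Local Open Scope ring_scope.

(* Time steps are 0-indexed: states s_0..s_H, actions a_0..a_{H-1};
   step t : 'I_H is the paper's step t+1, and s_{t+1} is the next state. *)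

Definition episode (H : nat) (S A : finType) : finType :=
  ({ffun 'I_H.+1 -> S} * {ffun 'I_H -> A})%type.

Definition st (H : nat) (S A : finType) (e : episode H S A) (t : 'I_H) : S :=
  e.1 (widen_ord (leqnSn H) t).
Definition act (H : nat) (S A : finType) (e : episode H S A) (t : 'I_H) : A :=
  e.2 t.
Definition nxt (H : nat) (S A : finType) (e : episode H S A) (t : 'I_H) : S :=
  e.1 (lift ord0 t).

Definition is_distr (R : realType) (T : finType) (p : T -> R) : Prop :=
  (forall x, 0 <= p x) /\ \sum_(x : T) p x = 1.

Definition ep_prob (R : realType) (H : nat) (S A : finType)
  (d1 : S -> R) (mu : 'I_H -> S -> A -> R) (P : 'I_H -> S -> A -> S -> R)
  (e : episode H S A) : R :=
  d1 (e.1 ord0) *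
  \prod_(t < H) (mu t (st e t) (act e t) * P t (st e t) (act e t) (nxt e t)).

Definition dmu (R : realType) (H : nat) (S A : finType)
  (d1 : S -> R) (mu : 'I_H -> S -> A -> R) (P : 'I_H -> S -> A -> S -> R)
  (t : 'I_H) (s : S) (a : A) : R :=
  \sum_(e : episode H S A | (st e t == s) && (act e t == a)) ep_prob d1 mu P e.

(* A dataset of l episodes; they are i.i.d., so its law is the product law. *)
Definition dataset (l H : nat) (S A : finType) : finType :=
  {ffun 'I_l -> episode H S A}.

Definition data_prob (R : realType) (l H : nat) (S A : finType)
  (d1 : S -> R) (mu : 'I_H -> S -> A -> R) (P : 'I_H -> S -> A -> S -> R)
  (D : dataset l H S A) : R :=
  \prod_(j < l) ep_prob d1 mu P (D j).

Definition Pr_data (R : realType) (l H : nat) (S A : finType)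
  (d1 : S -> R) (mu : 'I_H -> S -> A -> R) (P : 'I_H -> S -> A -> S -> R)
  (E : pred (dataset l H S A)) : R :=
  \sum_(D : dataset l H S A | E D) data_prob d1 mu P D.

Definition ncount (l H : nat) (S A : finType) (D : dataset l H S A)
  (t : 'I_H) (s : S) (a : A) : nat :=
  #|[set j : 'I_l | (st (D j) t == s) && (act (D j) t == a)]|.

Definition PV (R : realType) (H : nat) (S A : finType)
  (P : 'I_H -> S -> A -> S -> R) (t : 'I_H) (s : S) (a : A) (V : S -> R) : R :=
  \sum_(s' : S) P t s a s' * V s'.

Definition fbonus (R : realType) (H : nat) (S A : finType) (l : nat)
  (u delta d : R) : R :=
  4 * u * Num.sqrt (ln (2 * H%:R * #|S|%:R * #|A|%:R / delta) / (l%:R * d)).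

Definition gfun (R : realType) (l H : nat) (S A : finType)
  (d1 : S -> R) (mu : 'I_H -> S -> A -> R) (P : 'I_H -> S -> A -> S -> R)
  (u delta : R) (V Vin : S -> R) (D : dataset l H S A)
  (t : 'I_H) (s : S) (a : A) : R :=
  let d := dmu d1 mu P t s a in
  let n := ncount D t s a in
  let f := fbonus H S A l u delta d in
  if (n%:R < l%:R * d / 2)
  then PV P t s a (fun x => V x - Vin x) - f
  else (n%:R)^-1 *
       \sum_(j < l | (st (D j) t == s) && (act (D j) t == a))
          (V (nxt (D j) t) - Vin (nxt (D j) t)) - f.

(* Main.v *)
Require Import Defs.
From HB Require Import structures.
From mathcomp Require Import all_boot all_order all_algebra.
From mathcomp Require Import reals exp.
From mathcomp Require Import perm zify.
From mathcomp Require Import all_classical all_reals.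
From mathcomp Require Import topology normedtype sequences derive realfun exp.
From mathcomp Require Import ring lra.
Import Order.TTheory GRing.Theory Num.Theory.
Import numFieldNormedType.Exports.
Local Open Scope ring_scope.

Section Hoeff.
Local Open Scope classical_set_scope.
Variable R : realType.

Lemma is_deriveV1 (f : R -> R) (x df : R) :
  f x != 0 -> is_derive x 1 f df ->
  is_derive x 1 (fun y => (f y)^-1) (- (f x) ^- 2 * df).
Proof.
move=> fx0 H; apply: DeriveDef; first exact: derivableV.
by rewrite deriveV // derive_val.
Qed.

Lemma cont_of_der (f df : R -> R) (a b : R) :
  (forall x : R, is_derive x 1 f (df x)) -> {within `[a, b], continuous f}.
Proof.
move=> H; apply: continuous_subspaceT => x.
exact/differentiable_continuous/derivable1_diffP/ex_derive.
Qed.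

Variable p : R.
Hypothesis p0 : 0 <= p.
Hypothesis p1 : p <= 1.

Let D (h : R) := 1 - p + p * expR h.
Lemma D_gt0 h : 0 < D h.
Proof.
rewrite /D; have := expR_gt0 h => e0.
case: (leP 1 (expR h)) => e1.
  have : 0 <= p * (expR h - 1) by rewrite mulr_ge0 // subr_ge0.
  lra.
have : p * (1 - expR h) <= 1 - expR h.
  by rewrite ler_piMl // subr_ge0 ltW.
lra.
Qed.

Let q (h : R) := p * expR h * (D h)^-1.

Lemma Dder (x : R) : is_derive x 1 D (p * expR x).
Proof.
rewrite /D; apply: is_derive_eq.
rewrite /GRing.scale /=. ring.
Qed.

Lemma qder (x : R) : is_derive x 1 q (q x * (1 - q x)).
Proof.
have Hf : is_derive x 1 (fun h => p * expR h) (p * expR x).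
  apply: is_derive_eq; rewrite /GRing.scale /=; ring.
have HV := @is_deriveV1 D x _ (lt0r_neq0 (D_gt0 x)) (Dder x).
have Eq : q = (fun h => p * expR h) * (fun h => (D h)^-1).
  by apply/funext => h; rewrite /q.
rewrite {1}Eq.
have HM := is_deriveM Hf HV. apply: (is_derive_eq HM).
rewrite /GRing.scale /= /q.
have := D_gt0 x; rewrite /D => Dx.
field; exact: lt0r_neq0.
Qed.

Let G (h : R) := p + h / 4 - q h.

Lemma q_01 (x : R) : 0 <= q x <= 1.
Proof.
have Dx := D_gt0 x; have ex := expR_gt0 x.
rewrite /q; apply/andP; split.
  apply: divr_ge0; last exact: ltW.
  by apply: mulr_ge0 => //; exact: ltW.
rewrite ler_pdivrMr // mul1r /D addrC lerDl subr_ge0; exact: p1.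
Qed.

Lemma Gder (x : R) : is_derive x 1 G (1/4 - q x * (1 - q x)).
Proof.
have Hq := qder x.
rewrite /G; apply: is_derive_eq.
by rewrite /GRing.scale /=; field.
Qed.

Lemma G0 : G 0 = 0.
Proof. by rewrite /G /q /D expR0 !mulr1 subrK divr1 mul0r addr0 subrr. Qed.

Lemma Gder_ge0 (x : R) : 0 <= 1/4 - q x * (1 - q x).
Proof. have -> : 1/4 - q x * (1 - q x) = (q x - 1/2)^+2 by field. exact: sqr_ge0. Qed.

Lemma G_sign (h : R) : (0 <= h -> 0 <= G h) /\ (h <= 0 -> G h <= 0).
Proof.
have cG : forall a b : R, {within `[a, b], continuous G}.
  by move=> a b; apply: cont_of_der => x; exact: Gder.
case: (ltgtP h 0) => [hlt|hgt|->]; last by rewrite G0 lexx.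
- split; first by move=> H; lra.
  move=> _; have [c _ E] := MVT hlt (fun x _ => Gder x) (cG _ _).
  move: E; rewrite G0 => E.
  have := Gder_ge0 c; have : 0 < 0 - h by lra. nra.
- split; last by move=> H; lra.
  move=> _; have [c _ E] := MVT hgt (fun x _ => Gder x) (cG _ _).
  move: E; rewrite G0 => E.
  have := Gder_ge0 c. nra.
Qed.

Let K (h : R) := D h * expR (- (p * h + h ^+ 2 / 8)).

Lemma Kder (x : R) : is_derive x 1 K (- (expR (- (p * x + x ^+ 2 / 8)) * D x * G x)).
Proof.
have Hg : is_derive x 1 (fun h : R => - (p * h + h ^+ 2 / 8)) (- (p + x / 4)).
  by apply: is_derive_eq; rewrite /GRing.scale /=; field.
have He := is_derive1_comp (is_derive_expR _) Hg.
have HD := Dder x.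
have Eq : K = D * (expR \o (fun h : R => - (p * h + h ^+ 2 / 8))).
  by apply/funext => h.
rewrite {1}Eq.
have HM := is_deriveM HD He.
apply: (is_derive_eq HM).
rewrite /GRing.scale /= /G /q.
have := D_gt0 x => Dx.
field; exact: lt0r_neq0.
Qed.

Lemma K0 : K 0 = 1.
Proof.
by rewrite /K /D expR0 mulr1 subrK expr0n /= mul0r mulr0 addr0 oppr0 expR0 mulr1.
Qed.

Lemma K_le1 (h : R) : K h <= 1.
Proof.
have cK : forall a b : R, {within `[a, b], continuous K}.
  by move=> a b; apply: cont_of_der => x; exact: Kder.
have pos c : 0 < expR (- (p * c + c ^+ 2 / 8)) * D c.
  by apply: mulr_gt0; [exact: expR_gt0 | exact: D_gt0].
case: (ltgtP h 0) => [hlt|hgt|->]; last by rewrite K0 lexx.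
- have [c cI E] := MVT hlt (fun x _ => Kder x) (cK _ _).
  move: E; rewrite K0 => E.
  have c0 : c <= 0 by move: cI; rewrite in_itv /= => /andP[_ /ltW].
  have := (G_sign c).2 c0; have := pos c.
  move: E; set X := expR _ * D c => E X0 G0'.
  have : 0 <= X * G c * h.
    by apply: mulr_le0 => //; [apply: mulr_ge0_le0 => //; exact: ltW | exact: ltW].
  move: E; rewrite mulNr -mulrN opprB subr0 => E; lra.
- have [c cI E] := MVT hgt (fun x _ => Kder x) (cK _ _).
  move: E; rewrite K0 => E.
  have c0 : 0 <= c by move: cI; rewrite in_itv /= => /andP[/ltW].
  have := (G_sign c).1 c0; have := pos c.
  move: E; set X := expR _ * D c => E X0 G0'.
  have : 0 <= X * G c * h.
    by apply: mulr_ge0 => //; [apply: mulr_ge0 => //; exact: ltW | exact: ltW].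
  move: E; rewrite subr0 => E; lra.
Qed.

Lemma hoeff_scalar (h : R) : 1 - p + p * expR h <= expR (p * h + h ^+ 2 / 8).
Proof.
have := K_le1 h; rewrite /K /D expRN.
by rewrite ler_pdivrMr ?expR_gt0 // mul1r.
Qed.
End Hoeff.

Lemma exp_chord (R : realType) (lam a b y : R) : a < b -> a <= y <= b ->
  expR (lam * y) <= ((b - y) * expR (lam * a) + (y - a) * expR (lam * b)) / (b - a).
Proof.
move=> ab /andP[ay yb].
have ba : 0 < b - a by rewrite subr_gt0.
rewrite ler_pdivlMr //.
have E1 : expR (lam * y) * (1 + lam * (a - y)) <= expR (lam * a).
  have -> : lam * a = lam * y + lam * (a - y) by ring.
  rewrite expRD; apply: ler_wpM2l; [exact: ltW (expR_gt0 _)| exact: expR_ge1Dx].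
have E2 : expR (lam * y) * (1 + lam * (b - y)) <= expR (lam * b).
  have -> : lam * b = lam * y + lam * (b - y) by ring.
  rewrite expRD; apply: ler_wpM2l; [exact: ltW (expR_gt0 _)| exact: expR_ge1Dx].
have H1 : (b - y) * (expR (lam * y) * (1 + lam * (a - y))) <= (b - y) * expR (lam * a).
  by apply: ler_wpM2l; rewrite ?subr_ge0.
have H2 : (y - a) * (expR (lam * y) * (1 + lam * (b - y))) <= (y - a) * expR (lam * b).
  by apply: ler_wpM2l; rewrite ?subr_ge0.
have key : (b - y) * (expR (lam * y) * (1 + lam * (a - y))) +
   (y - a) * (expR (lam * y) * (1 + lam * (b - y))) = expR (lam * y) * (b - a) by ring.
lra.
Qed.

Lemma hoeffding (R : realType) (T : finType) (p Z : T -> R) (a b lam : R) :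
  (forall x, 0 <= p x) -> \sum_x p x = 1 -> (forall x, a <= Z x <= b) -> a < b ->
  \sum_x p x * Z x = 0 ->
  \sum_x p x * expR (lam * Z x) <= expR (lam ^+ 2 * (b - a) ^+ 2 / 8).
Proof.
move=> p0 p1 Zab ab pZ.
have ba : 0 < b - a by rewrite subr_gt0.
set A := expR (lam * a); set B := expR (lam * b).
set c0 := (b * A - a * B) / (b - a); set c1 := (B - A) / (b - a).
have step : \sum_x p x * expR (lam * Z x) <= c0.
  apply: (@le_trans _ _ (\sum_x (p x * c0 + (p x * Z x) * c1))).
    apply: ler_sum => x _.
    have -> : p x * c0 + p x * Z x * c1 =
      p x * (((b - Z x) * A + (Z x - a) * B) / (b - a)).
      rewrite /c0 /c1; field; exact: lt0r_neq0.
    by apply: ler_wpM2l => //; apply: exp_chord.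
  by rewrite big_split /= -!mulr_suml p1 pZ mul0r mul1r addr0.
have a0 : a <= 0.
  rewrite -pZ; apply: (@le_trans _ _ (\sum_x p x * a)).
    by rewrite -mulr_suml p1 mul1r.
  by apply: ler_sum => x _; apply: ler_wpM2l => //; case/andP: (Zab x).
have b0 : 0 <= b.
  rewrite -pZ; apply: (@le_trans _ _ (\sum_x p x * b)); last first.
    by rewrite -mulr_suml p1 mul1r.
  by apply: ler_sum => x _; apply: ler_wpM2l => //; case/andP: (Zab x).
set pi := - a / (b - a).
have pi0 : 0 <= pi by rewrite /pi divr_ge0 ?oppr_ge0 // ltW.
have pi1 : pi <= 1 by rewrite /pi ler_pdivrMr // mul1r; lra.
have := @hoeff_scalar R pi pi0 pi1 (lam * (b - a)) => Hs.
apply: (le_trans step).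
have -> : c0 = A * (1 - pi + pi * expR (lam * (b - a))).
  rewrite /c0 /pi /A /B.
  have -> : lam * b = lam * a + lam * (b - a) by ring.
  rewrite expRD; field; exact: lt0r_neq0.
have -> : lam ^+ 2 * (b - a) ^+ 2 / 8 = lam * a + (pi * (lam * (b - a)) + (lam * (b - a)) ^+ 2 / 8).
  rewrite /pi; field; exact: lt0r_neq0.
rewrite expRD /A; apply: ler_wpM2l => //; exact: ltW (expR_gt0 _).
Qed.

Set Implicit Arguments. Unset Strict Implicit.
Section Chain.
Variable R : numDomainType.

Definition upd (I T : finType) (x : {ffun I -> T}) (j : I) (v : T) : {ffun I -> T} :=
  [ffun i => if i == j then v else x i].
Arguments upd {I T}.

Lemma key_one (I T : finType) (j : I) (c : T) (F : {ffun I -> T} -> T -> R) :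
  (forall x s v, F (upd x j v) s = F x s) ->
  \sum_(x : {ffun I -> T}) F x (x j) = \sum_(x : {ffun I -> T} | x j == c) \sum_s F x s.
Proof.
move=> Finv.
transitivity (\sum_(x : {ffun I -> T}) \sum_s (if x j == s then F x s else 0)).
  apply: eq_bigr => x _; rewrite -big_mkcond /=.
  by rewrite (big_pred1 (x j)) // => s; rewrite eq_sym.
rewrite exchange_big /= [RHS]exchange_big /=.
apply: eq_bigr => s _; rewrite [RHS]big_mkcond /=.
pose sig (x : {ffun I -> T}) := upd x j (tperm c s (x j)).
have sigK : involutive sig.
  move=> x; apply/ffunP => i; rewrite /sig /upd !ffunE.
  case: (eqVneq i j) => [->|_]; last by [].
  by rewrite eqxx tpermK.
rewrite (reindex_inj (inv_inj sigK)) /=.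
apply: eq_bigr => x _.
have -> : sig x j = tperm c s (x j) by rewrite /sig /upd ffunE eqxx.
rewrite /sig Finv.
have -> : (tperm c s (x j) == s) = (x j == c).
  by rewrite -[X in _ == X](tpermL c s) (inj_eq (@perm_inj _ (tperm c s))).
by [].
Qed.

Lemma key (I T : finType) (j : I) (c : T) (F F' : {ffun I -> T} -> T -> R) :
  (forall x s v, F (upd x j v) s = F x s) ->
  (forall x s v, F' (upd x j v) s = F' x s) ->
  (forall x, \sum_s F x s = \sum_s F' x s) ->
  \sum_(x : {ffun I -> T}) F x (x j) = \sum_(x : {ffun I -> T}) F' x (x j).
Proof.
by move=> H1 H2 H3; rewrite (key_one c H1) (key_one c H2); apply: eq_bigr.
Qed.

Lemma updE (I T : finType) (x : {ffun I -> T}) j v i :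
  upd x j v i = if i == j then v else x i.
Proof. by rewrite ffunE. Qed.

Variables (n : nat) (T : finType) (init : T -> R) (c : T).
Definition wd (k : 'I_n) : 'I_n.+1 := widen_ord (leqnSn n) k.
Definition lf (k : 'I_n) : 'I_n.+1 := lift ord0 k.

Definition tsum (m : nat) (K : 'I_n -> T -> T -> R) :=
  \sum_(x : {ffun 'I_n.+1 -> T}) init (x ord0) *
    \prod_(k < n) (if (k < m)%N then K k (x (wd k)) (x (lf k)) else (x (lf k) == c)%:R).

Lemma wd_lf (k m : 'I_n) : (wd k == lf m) = false -> True. Proof. by []. Qed.

Lemma wdlfE (k m : 'I_n) : (wd k == lf m) = (val k == m.+1).
Proof. by rewrite /wd /lf -val_eqE /= /bump leq0n. Qed.
Lemma lflfE (k m : 'I_n) : (lf k == lf m) = (k == m).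
Proof. by rewrite /lf (inj_eq (@lift_inj _ ord0)). Qed.
Lemma o0lfE (m : 'I_n) : (ord0 == lf m) = false.
Proof. by rewrite /lf -val_eqE /= /bump leq0n. Qed.

Lemma sum_ind (U : finType) (c0 : U) : \sum_(s : U) (s == c0)%:R = 1 :> R.
Proof. by rewrite (bigD1 c0) //= eqxx big1 ?addr0 // => s /negbTE ->. Qed.

Lemma tsum_gen (m : 'I_n) (K K' : 'I_n -> T -> T -> R) :
  (forall k : 'I_n, (k < m)%N -> forall s s', K k s s' = K' k s s') ->
  (forall s, \sum_s' K m s s' = \sum_s' K' m s s') -> tsum m.+1 K = tsum m.+1 K'.
Proof.
move=> KK Ks.
pose G (x : {ffun 'I_n.+1 -> T}) (k : 'I_n) :=
  if (k < m)%N then K k (x (wd k)) (x (lf k)) else (x (lf k) == c)%:R.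
pose F L (x : {ffun 'I_n.+1 -> T}) (s : T) :=
  init (x ord0) * ((L m (x (wd m)) s) * \prod_(k < n | k != m) G x k).
have Ginv x v k : k != m -> G (upd x (lf m) v) k = G x k.
  move=> km; rewrite /G !updE wdlfE lflfE (negbTE km).
  case: ifP => // km'; have -> : (val k == m.+1) = false by apply/negbTE; rewrite neq_ltn ltnS ltnW.
  by [].
have tsF L : (forall k : 'I_n, (k < m)%N -> forall s s', L k s s' = K k s s') ->
    tsum m.+1 L = \sum_(x : {ffun 'I_n.+1 -> T}) F L x (x (lf m)).
  move=> LK; apply: eq_bigr => x _; rewrite /F; congr (_ * _).
  rewrite (bigD1 m) //= ltnSn; congr (_ * _).
  apply: eq_bigr => k km; rewrite /G ltnS.
  rewrite leq_eqVlt val_eqE (negbTE km) /=.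
  by case: ifP => // /LK ->.
have Finv L x s v : F L (upd x (lf m) v) s = F L x s.
  rewrite /F updE o0lfE updE wdlfE; congr (_ * (_ * _)).
    by rewrite (ltn_eqF (ltnSn m)).
  by apply: eq_bigr => k km; rewrite Ginv.
rewrite (tsF K) // (tsF K'); last by move=> k /KK H s s'; rewrite H.
apply: (key c) => // x.
by rewrite /F -!big_distrr /=; congr (_ * _); rewrite -!big_distrl /= Ks.
Qed.

Lemma tsum_step (m : 'I_n) (K : 'I_n -> T -> T -> R) :
  (forall s, \sum_s' K m s s' = 1) -> tsum m.+1 K = tsum m K.
Proof.
move=> Ks.
pose K' (k : 'I_n) (s s' : T) := if k == m then (s' == c)%:R else K k s s'.
rewrite (@tsum_gen m K K').
- apply: eq_bigr => x _; congr (_ * _); apply: eq_bigr => k _.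
  rewrite /K' ltnS leq_eqVlt val_eqE.
  case: (eqVneq k m) => [->|km] /=; first by rewrite ltnn.
  by [].
- by move=> k km s s'; rewrite /K' -val_eqE ltn_eqF.
- by move=> s; rewrite Ks /K' eqxx sum_ind.
Qed.

Lemma tsum_down (K : 'I_n -> T -> T -> R) (m : nat) : (m <= n)%N ->
  (forall k : 'I_n, (m <= k)%N -> forall s, \sum_s' K k s s' = 1) -> tsum n K = tsum m K.
Proof.
move=> mn Hk.
suff: forall d m', (m' <= n)%N -> (n - m')%N = d ->
  (forall k : 'I_n, (m' <= k)%N -> forall s, \sum_s' K k s s' = 1) -> tsum n K = tsum m' K.
  by move=> /(_ _ m mn erefl Hk).
elim=> [|d IH] m' m'n e H.
  by have -> : m' = n by lia.
have m'n' : (m' < n)%N by lia.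
rewrite (IH m'.+1) //.
- exact: (@tsum_step (Ordinal m'n')) (H (Ordinal m'n') (leqnn _)).
- by lia.
- by move=> k mk; apply: H; apply: ltnW.
Qed.

Definition chainsum (K : 'I_n -> T -> T -> R) :=
  \sum_(x : {ffun 'I_n.+1 -> T}) init (x ord0) * \prod_(k < n) K k (x (wd k)) (x (lf k)).

Lemma chain_tsum K : chainsum K = tsum n K.
Proof. by apply: eq_bigr => x _; congr (_ * _); apply: eq_bigr => k _; rewrite ltn_ord. Qed.

Lemma tsum0 K : tsum 0 K = \sum_s init s.
Proof.
rewrite /tsum.
pose P (x : {ffun 'I_n.+1 -> T}) := \prod_(k < n) (x (lf k) == c)%:R :> R.
have Pinv x v : P (upd x ord0 v) = P x.
  by rewrite /P; apply: eq_bigr => k _; rewrite updE (eq_sym (lf k)) o0lfE.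
transitivity (\sum_(x : {ffun 'I_n.+1 -> T}) ((x ord0 == c)%:R * (\sum_s init s)) * P x).
  apply: (@key _ _ ord0 c (fun x s => init s * P x) (fun x s => ((s == c)%:R * (\sum_s init s)) * P x)).
  - by move=> x s v; rewrite Pinv.
  - by move=> x s v; rewrite Pinv.
  - by move=> x; rewrite -!big_distrl /= sum_ind mul1r.
have E (x : {ffun 'I_n.+1 -> T}) : (x ord0 == c)%:R * P x = ((x == [ffun=> c])%:R : R).
  rewrite /P -(big_ord_recl n (fun i => (x i == c)%:R)).
  case: (eqVneq x [ffun=> c]) => [->|xc].
    by rewrite big1 // => i _; rewrite ffunE eqxx.
  case: (pickP (fun i => x i != c)) => [i /negbTE xi|none].
    by rewrite (bigD1 i) //= xi mul0r.
  by case/eqP: xc; apply/ffunP => i; rewrite ffunE; move: (none i) => /negbFE/eqP.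
under eq_bigr do rewrite mulrAC E.
by rewrite -big_distrl /= sum_ind mul1r.
Qed.

Lemma chain_total K : (forall k s, \sum_s' K k s s' = 1) -> chainsum K = \sum_s init s.
Proof.
by move=> HK; rewrite chain_tsum (@tsum_down K 0) // ?tsum0 // => k _; exact: HK.
Qed.

Lemma chain_swap (t : 'I_n) (K K' : 'I_n -> T -> T -> R) :
  (forall k : 'I_n, (k < t)%N -> forall s s', K k s s' = K' k s s') ->
  (forall s, \sum_s' K t s s' = \sum_s' K' t s s') ->
  (forall k : 'I_n, (t < k)%N -> forall s, \sum_s' K k s s' = 1) ->
  (forall k : 'I_n, (t < k)%N -> forall s, \sum_s' K' k s s' = 1) ->
  chainsum K = chainsum K'.
Proof.
move=> H1 H2 H3 H4.
rewrite !chain_tsum (@tsum_down K t.+1) // (@tsum_down K' t.+1) //.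
exact: tsum_gen.
Qed.
End Chain.

Section Ep.
Variables (R : realType) (S A : finType) (H : nat).
Variables (d1 : S -> R) (mu : 'I_H -> S -> A -> R) (P : 'I_H -> S -> A -> S -> R).

Lemma ep_chain (F : 'I_H -> S -> A -> S -> R) :
  \sum_(e : episode H S A) d1 (e.1 ord0) * \prod_(k < H) F k (st e k) (act e k) (nxt e k)
  = chainsum d1 (fun k s s' => \sum_a F k s a s').
Proof.
rewrite /chainsum -(pair_big xpredT xpredT (fun (x : {ffun 'I_H.+1 -> S}) (y : {ffun 'I_H -> A}) =>
   d1 (x ord0) * \prod_(k < H) F k (x (wd k)) (y k) (x (lf k)))) /=.
apply: eq_bigr => x _.
rewrite -big_distrr /=; congr (_ * _).
by rewrite bigA_distr_bigA.
Qed.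

Lemma ep_total : is_distr d1 -> (forall t s, is_distr (mu t s)) ->
  (forall t s a, is_distr (P t s a)) ->
  \sum_(e : episode H S A) ep_prob d1 mu P e = 1.
Proof.
move=> [_ hd] hmu hP.
have [c _] : exists c : S, true.
  case: (pickP (fun _ : S => true)) => [c|none]; first by exists c.
  by move: hd; rewrite big_pred0 // => /esym/eqP; rewrite oner_eq0.
rewrite /ep_prob (ep_chain (fun k s a s' => mu k s a * P k s a s')).
rewrite (chain_total d1 c) ?hd // => k s.
rewrite exchange_big /=.
rewrite -(hmu k s).2; apply: eq_bigr => a _.
by rewrite -mulr_sumr (hP k s a).2 mulr1.
Qed.


Lemma prod_if (t : 'I_H) (g : 'I_H -> R) :
  \prod_(k < H) (if k == t then g k else 1) = g t.
Proof. by rewrite -big_mkcond big_pred1_eq. Qed.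

Lemma ep_markov (t : 'I_H) (phi : S -> A -> S -> R) : is_distr d1 ->
  (forall t s, is_distr (mu t s)) -> (forall t s a, is_distr (P t s a)) ->
  \sum_(e : episode H S A) ep_prob d1 mu P e * phi (st e t) (act e t) (nxt e t) =
  \sum_(e : episode H S A) ep_prob d1 mu P e *
     (\sum_s' P t (st e t) (act e t) s' * phi (st e t) (act e t) s').
Proof.
move=> [_ hd] hmu hP.
have [c _] : exists c : S, true.
  case: (pickP (fun _ : S => true)) => [c|none]; first by exists c.
  by move: hd; rewrite big_pred0 // => /esym/eqP; rewrite oner_eq0.
pose F1 k s a s' := mu k s a * P k s a s' * (if k == t then phi s a s' else 1).
pose F2 k s a (s' : S) := mu k s a * P k s a s' *
   (if k == t then \sum_s'' P t s a s'' * phi s a s'' else 1).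
transitivity (\sum_(e : episode H S A) d1 (e.1 ord0) *
   \prod_(k < H) F1 k (st e k) (act e k) (nxt e k)).
  apply: eq_bigr => e _; rewrite /ep_prob /F1 [in RHS]big_split /= -mulrA.
  by rewrite -[in RHS]big_mkcond big_pred1_eq.
transitivity (\sum_(e : episode H S A) d1 (e.1 ord0) *
   \prod_(k < H) F2 k (st e k) (act e k) (nxt e k)); last first.
  apply: eq_bigr => e _; rewrite /ep_prob /F2 [in LHS]big_split /= -[in RHS]mulrA.
  by rewrite -[in LHS]big_mkcond big_pred1_eq.
rewrite !ep_chain; apply: (chain_swap d1 c (t:=t)).
- move=> k kt s s'; apply: eq_bigr => a _; rewrite /F1 /F2.
  by have -> : (k == t) = false by apply/negbTE; rewrite -val_eqE /= ltn_eqF.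
- move=> s; rewrite /F1 /F2 eqxx exchange_big [in RHS]exchange_big /=.
  apply: eq_bigr => a _.
  rewrite -[in RHS]big_distrl /= -[in RHS]mulr_sumr (hP t s a).2 mulr1.
  by rewrite mulr_sumr; apply: eq_bigr => s' _; rewrite mulrA.
- move=> k tk s; rewrite /F1; have -> : (k == t) = false by apply/negbTE; rewrite -val_eqE /= gtn_eqF.
  rewrite exchange_big /= -[RHS](hmu k s).2; apply: eq_bigr => a _.
  by under eq_bigr do rewrite mulr1; rewrite -mulr_sumr (hP k s a).2 mulr1.
- move=> k tk s; rewrite /F2; have -> : (k == t) = false by apply/negbTE; rewrite -val_eqE /= gtn_eqF.
  rewrite exchange_big /= -[RHS](hmu k s).2; apply: eq_bigr => a _.
  by under eq_bigr do rewrite mulr1; rewrite -mulr_sumr (hP k s a).2 mulr1.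
Qed.
End Ep.

Section Data.
Variables (R : realType) (S A : finType) (H l : nat).
Variables (d1 : S -> R) (mu : 'I_H -> S -> A -> R) (P : 'I_H -> S -> A -> S -> R).

Lemma data_prod (h : episode H S A -> R) :
  \sum_(D : dataset l H S A) data_prob d1 mu P D * \prod_(j < l) h (D j) =
  (\sum_(e : episode H S A) ep_prob d1 mu P e * h e) ^+ l.
Proof.
rewrite /data_prob.
under eq_bigr do rewrite -big_split /=.
rewrite -(bigA_distr_bigA (fun (j : 'I_l) (e : episode H S A) => ep_prob d1 mu P e * h e)) /=.
by rewrite prodr_const card_ord.
Qed.

Lemma data_total : is_distr d1 -> (forall t s, is_distr (mu t s)) ->
  (forall t s a, is_distr (P t s a)) ->
  \sum_(D : dataset l H S A) data_prob d1 mu P D = 1.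
Proof.
move=> hd hmu hP.
have := data_prod (fun _ => 1).
under eq_bigr do rewrite big1_eq mulr1.
under [in X in _ = X]eq_bigr do rewrite mulr1.
by rewrite (ep_total hd hmu hP) expr1n.
Qed.

End Data.

Lemma sum_count (l : nat) (R : realType) (c : pred 'I_l) (k : R) :
  \sum_(j < l | c j) k = #|[set j | c j]|%:R * k.
Proof.
rewrite (eq_bigl (fun j => j \in [set j | c j])); last by move=> j; rewrite inE.
by rewrite sumr_const mulr_natl.
Qed.

Lemma sum_affine (l : nat) (R : realType) (c : pred 'I_l) (w : 'I_l -> R) (al be ga : R) :
  \sum_(j < l | c j) (al * (w j - be) + ga) =
  al * (\sum_(j < l | c j) w j - #|[set j | c j]|%:R * be) + #|[set j | c j]|%:R * ga.
Proof.
rewrite big_split /= sum_count -mulr_sumr sumrB sum_count.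
by [].
Qed.

Lemma prod_exp (l : nat) (R : realType) (c : pred 'I_l) (z : 'I_l -> R) :
  \prod_(j < l) (if c j then expR (z j) else 1) = expR (\sum_(j < l | c j) z j).
Proof.
rewrite expR_sum.
by rewrite [RHS]big_mkcond.
Qed.

Definition sumW (R : realType) (S A : finType) (H l : nat) (V Vin : S -> R)
  (D : dataset l H S A) (t : 'I_H) (s : S) (a : A) : R :=
  \sum_(j < l | (st (D j) t == s) && (act (D j) t == a))
     (V (nxt (D j) t) - Vin (nxt (D j) t)).

Definition badb (R : realType) (S A : finType) (H l : nat)
  (d1 : S -> R) (mu : 'I_H -> S -> A -> R) (P : 'I_H -> S -> A -> S -> R)
  (u delta eps : R) (V Vin : S -> R) (D : dataset l H S A) (t : 'I_H) (s : S) (a : A) : bool :=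
  let d := dmu d1 mu P t s a in
  let n := (ncount D t s a)%:R in
  (l%:R * d / 2 <= n) &&
  (n * fbonus H S A l u delta d < eps * (sumW V Vin D t s a - n * PV P t s a (fun x => V x - Vin x))).

Section Pair.
Variables (R : realType) (S A : finType) (H l : nat).
Variables (d1 : S -> R) (mu : 'I_H -> S -> A -> R) (P : 'I_H -> S -> A -> S -> R).
Variables (delta u : R) (t : 'I_H) (V Vin : S -> R).
Hypotheses (hd : is_distr d1) (hmu : forall t s, is_distr (mu t s))
  (hP : forall t s a, is_distr (P t s a)).
Hypotheses (del0 : 0 < delta) (u0 : 0 < u) (l0 : (0 < l)%N)
  (hW : forall s, `|V s - Vin s| <= 2 * u).

Lemma ep_ge0 (e : episode H S A) : 0 <= ep_prob d1 mu P e.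
Proof.
rewrite /ep_prob; apply: mulr_ge0; first by case: hd.
apply: prodr_ge0 => k _; apply: mulr_ge0; first by case: (hmu k (st e k)).
by case: (hP k (st e k) (act e k)).
Qed.

Lemma dp_ge0 (D : dataset l H S A) : 0 <= data_prob d1 mu P D.
Proof. by apply: prodr_ge0 => j _; exact: ep_ge0. Qed.

Variables (s : S) (a : A) (eps : R).
Hypothesis heps : eps ^+ 2 = 1.
Hypothesis d0 : 0 < dmu d1 mu P t s a.
Hypothesis N0 : 0 < 2 * H%:R * #|S|%:R * #|A|%:R :> R.
Hypothesis HL : 0 < ln (2 * H%:R * #|S|%:R * #|A|%:R / delta).

Lemma pair_bound :
  \sum_(D : dataset l H S A) data_prob d1 mu P D * (badb d1 mu P u delta eps V Vin D t s a)%:R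
  <= delta / (2 * H%:R * #|S|%:R * #|A|%:R).
Proof.
set d := dmu d1 mu P t s a.
set N := 2 * H%:R * #|S|%:R * #|A|%:R.
set Lg := ln (N / delta).
set PVsa := PV P t s a (fun x => V x - Vin x).
set f := fbonus H S A l u delta d.
have ld0 : 0 < l%:R * d by rewrite mulr_gt0 // ltr0n.
set sig := Num.sqrt (Lg / (l%:R * d)).
have fE : f = 4 * u * sig by [].
have sig2 : sig ^+ 2 = Lg / (l%:R * d).
  by rewrite sqr_sqrtr // divr_ge0 // ltW.
have sig0 : 0 < sig by rewrite sqrtr_gt0 divr_gt0.
have f0 : 0 < f by rewrite fE !mulr_gt0.
set lam := f / (4 * u ^+ 2).
set th := f ^+ 2 / (8 * u ^+ 2).
set m := l%:R * d / 2.
have lam0 : 0 < lam by rewrite divr_gt0 // mulr_gt0 // exprn_gt0.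
have th0 : 0 <= th by rewrite divr_ge0 // ?sqr_ge0 // mulr_ge0 // sqr_ge0.
have u0' : u != 0 by exact: lt0r_neq0.
pose phi (s0 : S) (a0 : A) (s' : S) :=
  if (s0 == s) && (a0 == a) then expR (eps * lam * ((V s' - Vin s') - PVsa) - lam * f + th) else 1.
(* pointwise Chernoff *)
have pw : forall D : dataset l H S A, (badb d1 mu P u delta eps V Vin D t s a)%:R <=
    expR (- (th * m)) * \prod_(j < l) phi (st (D j) t) (act (D j) t) (nxt (D j) t).
  move=> D.
  have -> : \prod_(j < l) phi (st (D j) t) (act (D j) t) (nxt (D j) t) =
     expR ((eps * lam) * (sumW V Vin D t s a - (ncount D t s a)%:R * PVsa) +
           (ncount D t s a)%:R * (th - lam * f)).
    rewrite /sumW /ncount -sum_affine -prod_exp; apply: eq_bigr => j _.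
    rewrite /phi; case: ifP => // _; congr expR; ring.
  rewrite -expRD /badb /= -/d -/f -/PVsa.
  case: (boolP (_ && _)) => [/andP[nm nb]|_]; last by apply: ltW; exact: expR_gt0.
  set n := (ncount D t s a)%:R in nm nb *.
  set sW := sumW V Vin D t s a in nb *.
  have h1 : 0 <= lam * (eps * (sW - n * PVsa) - n * f).
    by rewrite mulr_ge0 // ?ltW // subr_gt0.
  have h2 : 0 <= th * (n - m) by rewrite mulr_ge0 // subr_ge0.
  apply: le_trans (expR_ge1Dx _).
  have -> : (true%:R : R) = 1 by []. lra.
have phi0 s0 a0 s' : 0 <= phi s0 a0 s'.
  by rewrite /phi; case: ifP => _ //; apply: ltW; exact: expR_gt0.
have psi1 s0 a0 : \sum_s' P t s0 a0 s' * phi s0 a0 s' <= 1.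
  rewrite /phi /=; case: (boolP ((s0 == s) && (a0 == a))) => Hc; last first.
    by under eq_bigr do rewrite mulr1; rewrite (hP t s0 a0).2.
  case/andP: Hc => /eqP -> /eqP ->.
  have HZ : forall x, -2 * u - PVsa <= V x - Vin x - PVsa <= 2 * u - PVsa.
    move=> x; have := hW x; rewrite ler_norml => /andP[h1 h2].
    apply/andP; split; lra.
  have Hm : \sum_s' P t s a s' * (V s' - Vin s' - PVsa) = 0.
    under eq_bigr do rewrite mulrBr.
    rewrite sumrB -mulr_suml (hP t s a).2 mul1r /PVsa /PV subrr //.
  have Hab : -2 * u - PVsa < 2 * u - PVsa by move: u0; lra.
  have := @hoeffding R S (P t s a) (fun x => V x - Vin x - PVsa) _ _ (eps * lam) (hP t s a).1 (hP t s a).2 HZ Hab Hm.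
  move=> Hh.
  have -> : \sum_s' P t s a s' * expR (eps * lam * (V s' - Vin s' - PVsa) - lam * f + th) =
     expR (th - lam * f) * \sum_s' P t s a s' * expR (eps * lam * (V s' - Vin s' - PVsa)).
    rewrite mulr_sumr; apply: eq_bigr => x _; rewrite [RHS]mulrCA -expRD; congr (_ * expR _); ring.
  apply: (le_trans (ler_wpM2l (ltW (expR_gt0 _)) Hh)).
  have Ez : th - lam * f + (eps * lam) ^+ 2 * (2 * u - PVsa - (-2 * u - PVsa)) ^+ 2 / 8 = 0.
    rewrite exprMn heps mul1r /lam /th.
    have -> : 2 * u - PVsa - (-2 * u - PVsa) = 4 * u by ring.
    by field.
  by rewrite -expRD Ez expR0.
have Eb : 0 <= \sum_(e : episode H S A) ep_prob d1 mu P e * phi (st e t) (act e t) (nxt e t) <= 1.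
  rewrite (ep_markov t phi hd hmu hP); apply/andP; split.
    apply: sumr_ge0 => e _; apply: mulr_ge0; first exact: ep_ge0.
    by apply: sumr_ge0 => s' _; apply: mulr_ge0 => //; case: (hP t (st e t) (act e t)).
  rewrite -(ep_total hd hmu hP); apply: ler_sum => e _.
  by rewrite -[X in _ <= X]mulr1; apply: ler_wpM2l; [exact: ep_ge0 | exact: psi1].
have Eth : th * m = Lg.
  rewrite /th /m fE exprMn sig2 /=; field.
  by rewrite u0' (lt0r_neq0 d0) pnatr_eq0 -lt0n l0.
apply: (le_trans (y := \sum_(D : dataset l H S A) data_prob d1 mu P D *
    (expR (- (th * m)) * \prod_(j < l) phi (st (D j) t) (act (D j) t) (nxt (D j) t)))).
  by apply: ler_sum => D _; apply: ler_wpM2l; [exact: dp_ge0 | exact: pw].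
under eq_bigr do rewrite mulrCA.
rewrite -mulr_sumr (@data_prod R S A H l d1 mu P (fun e => phi (st e t) (act e t) (nxt e t))).
case/andP: Eb => Eb0 Eb1.
apply: (le_trans (ler_wpM2l (ltW (expR_gt0 _)) (exprn_ile1 l Eb0 Eb1))).
rewrite mulr1 Eth expRN /Lg lnK ?invf_div //.
by rewrite posrE divr_gt0.
Qed.
End Pair.

Unset Implicit Arguments. Set Strict Implicit.
Lemma le_sum1 (R : realType) (I : finType) (F : I -> R) i :
  (forall j, 0 <= F j) -> F i <= \sum_j F j.
Proof. by move=> F0; rewrite (bigD1 i) //= lerDl sumr_ge0. Qed.

Theorem lemmaB4 (R : realType) (S A : finType) (H l : nat)
  (d1 : S -> R) (mu : 'I_H -> S -> A -> R) (P : 'I_H -> S -> A -> S -> R)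
  (delta u : R) (t : 'I_H) (V Vin : S -> R) :
  is_distr d1 ->
  (forall t s, is_distr (mu t s)) ->
  (forall t s a, is_distr (P t s a)) ->
  0 < delta < 1 ->
  0 < u ->
  (0 < l)%N ->
  (forall s, `|V s - Vin s| <= 2 * u) ->
  Pr_data d1 mu P
    (fun D : dataset l H S A =>
       [forall s : S, forall a : A,
          (0 < dmu d1 mu P t s a) ==>
          ((0 <= PV P t s a (fun x => V x - Vin x) - gfun d1 mu P u delta V Vin D t s a)
           && (PV P t s a (fun x => V x - Vin x) - gfun d1 mu P u delta V Vin D t s a
               <= 8 * u * Num.sqrt (ln (2 * H%:R * #|S|%:R * #|A|%:R / delta)
                                    / (l%:R * dmu d1 mu P t s a))))])
  >= 1 - delta / H%:R.
Proof.
move=> hd hmu hP /andP[del0 del1] u0 l0 hW.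
have H0 : (0 < H)%N by apply: leq_ltn_trans (leq0n t) (ltn_ord t).
have [s0 _] : exists s : S, true.
  case: (pickP (fun _ : S => true)) => [c|none]; first by exists c.
  by move: hd => [_]; rewrite big_pred0 // => /esym/eqP; rewrite oner_eq0.
have [a0 _] : exists a : A, true.
  case: (pickP (fun _ : A => true)) => [c|none]; first by exists c.
  by move: (hmu t s0) => [_]; rewrite big_pred0 // => /esym/eqP; rewrite oner_eq0.
have S0 : (0 < #|S|)%N by apply/card_gt0P; exists s0.
have A0 : (0 < #|A|)%N by apply/card_gt0P; exists a0.
set N := 2 * H%:R * #|S|%:R * #|A|%:R.
have NE : N = (2 * H * #|S| * #|A|)%:R by rewrite /N !natrM.
have N1 : 1 <= N by rewrite NE ler1n !muln_gt0 H0 S0 A0.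
have N0 : 0 < N by apply: lt_le_trans N1.
have HL : 0 < ln (N / delta).
  apply: ln_gt0; rewrite ltr_pdivlMr // mul1r.
  by apply: lt_le_trans del1 N1.
have Bnd : forall s a (eps : R), eps ^+ 2 = 1 ->
    \sum_(D : dataset l H S A) data_prob d1 mu P D *
      ((0 < dmu d1 mu P t s a) && badb d1 mu P u delta eps V Vin D t s a)%:R <= delta / N.
  move=> s a eps he; case: (boolP (0 < dmu d1 mu P t s a)) => dpos /=.
    exact: (pair_bound hd hmu hP del0 u0 l0 hW he dpos N0 HL).
  by rewrite big1 ?divr_ge0 ?ltW // => D _; rewrite mulr0.
have cS (c : R) : \sum_(s : S) c = #|S|%:R * c by rewrite sumr_const mulr_natl.
have cA (c : R) : \sum_(a : A) c = #|A|%:R * c by rewrite sumr_const mulr_natl.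
have badsa : forall (D : dataset l H S A) s a, 0 < dmu d1 mu P t s a ->
    ~~ ((0 <= PV P t s a (fun x => V x - Vin x) - gfun d1 mu P u delta V Vin D t s a)
           && (PV P t s a (fun x => V x - Vin x) - gfun d1 mu P u delta V Vin D t s a
               <= 8 * u * Num.sqrt (ln (2 * H%:R * #|S|%:R * #|A|%:R / delta)
                                    / (l%:R * dmu d1 mu P t s a)))) ->
    1 <= ((0 < dmu d1 mu P t s a) && badb d1 mu P u delta 1 V Vin D t s a)%:R +
         ((0 < dmu d1 mu P t s a) && badb d1 mu P u delta (-1) V Vin D t s a)%:R :> R.
  move=> D s a dpos.
  rewrite dpos /badb /gfun /=.
  set d := dmu d1 mu P t s a.
  set f := fbonus H S A l u delta d.
  have E8 : 8 * u * Num.sqrt (ln (2 * H%:R * #|S|%:R * #|A|%:R / delta) / (l%:R * d)) = 2 * f.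
    by rewrite /f /fbonus; ring.
  rewrite E8 -/(sumW V Vin D t s a).
  set n := (ncount D t s a)%:R.
  set sW := sumW V Vin D t s a.
  set PVsa := PV P t s a (fun x => V x - Vin x).
  have f0 : 0 <= f by rewrite /f /fbonus mulr_ge0 ?sqrtr_ge0 // mulr_ge0 // ltW.
  case: ifP => [_|nge].
    have -> : PVsa - (PVsa - f) = f by ring.
    by rewrite f0 /=; move: f0 => f0; have -> : f <= 2 * f by lra.
  have nm : l%:R * d / 2 <= n by rewrite leNgt nge.
  have n0 : 0 < n by apply: lt_le_trans nm; rewrite divr_gt0 // mulr_gt0 // ltr0n.
  have hm : n * (n^-1 * sW) = sW by rewrite mulVKf // lt0r_neq0.
  move: (n^-1 * sW) hm => mean hm.
  rewrite negb_and -!ltNge nm /= => /orP[h|h].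
    have : 0 < n * (mean - PVsa - f) by apply: mulr_gt0 => //; lra.
    move=> hp; have -> : n * f < 1 * (sW - n * PVsa) by rewrite -hm; lra.
    by rewrite /= lerDl.
  have : 0 < n * (PVsa - mean - f) by apply: mulr_gt0 => //; lra.
  move=> hp; have -> : n * f < -1 * (sW - n * PVsa) by rewrite -hm; lra.
  by rewrite /= lerDr.
pose bb s a (eps : R) (D : dataset l H S A) :=
  ((0 < dmu d1 mu P t s a) && badb d1 mu P u delta eps V Vin D t s a)%:R : R.
pose X D := \sum_(s : S) \sum_(a : A) (bb s a 1 D + bb s a (-1) D).
have X0 D : 0 <= X D.
  by apply: sumr_ge0 => s _; apply: sumr_ge0 => a _; apply: addr_ge0; apply: ler0n.
rewrite /Pr_data big_mkcond /=.
apply: (le_trans (y := \sum_(D : dataset l H S A) data_prob d1 mu P D * (1 - X D))); last first.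
  apply: ler_sum => D _; case: ifP => [_|].
    by rewrite -[X in _ <= X]mulr1; apply: ler_wpM2l; [exact: dp_ge0 | rewrite gerBl].
  move/negbT/forallPn => [s /forallPn [a]]; rewrite negb_imply => /andP[dpos ng].
  apply: mulr_ge0_le0; first exact: dp_ge0.
  rewrite subr_le0; apply: (le_trans (badsa D s a dpos ng)).
  apply: (le_trans (y := \sum_(a : A) (bb s a 1 D + bb s a (-1) D))).
    by apply: (@le_sum1 R A (fun a => bb s a 1 D + bb s a (-1) D) a) => a'; apply: addr_ge0; apply: ler0n.
  apply: (@le_sum1 R S (fun s => \sum_(a : A) (bb s a 1 D + bb s a (-1) D)) s) => s'.
  by apply: sumr_ge0 => a' _; apply: addr_ge0; apply: ler0n.
under eq_bigr do rewrite mulrBr mulr1.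
rewrite sumrB (@data_total R S A H l d1 mu P hd hmu hP) lerD2l lerN2.
have -> : \sum_(D : dataset l H S A) data_prob d1 mu P D * X D =
    \sum_(s : S) \sum_(a : A) (\sum_(D : dataset l H S A) data_prob d1 mu P D * bb s a 1 D +
                              \sum_(D : dataset l H S A) data_prob d1 mu P D * bb s a (-1) D).
  under eq_bigr do rewrite /X mulr_sumr.
  rewrite exchange_big /=; apply: eq_bigr => s _.
  under eq_bigr do rewrite mulr_sumr.
  rewrite exchange_big /=; apply: eq_bigr => a _.
  by rewrite -big_split /=; apply: eq_bigr => D _; rewrite mulrDr.
apply: (le_trans (y := \sum_(s : S) \sum_(a : A) (delta / N + delta / N))).
  apply: ler_sum => s _; apply: ler_sum => a _; apply: lerD.
    by apply: Bnd; rewrite expr1n.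
  by apply: Bnd; rewrite sqrrN expr1n.
rewrite cS cA /N.
rewrite le_eqVlt; apply/orP; left; apply/eqP; field.
by rewrite !pnatr_eq0 -!lt0n H0 A0 S0.
Qed.
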